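(* Let $\{(i\mid A_i): i\in[m]\}$ be an index coding instance, $B_i=[m]\setminus(A_i\cup\{i\})$, let $\boldsymbol{G}\in\{0,1\}^{r\times m}$ with row supports $G_j=\{i: g_{j,i}=1\}$, let $k\in[r]$ and let $d\ge1$ be an integer. Suppose $|F_K|\ge d-1+|K|$ for every nonempty $K\subseteq[k]$, where $F_K=\bigcup_{j\in K}G_j$. If $i\in[m]$ satisfies (1) $|F_{[k]}|=d-1+k$, (2) $\{i\}\cup A_i\subseteq F_{[k]}$, and (3) $|A_i|\ge d-1$, then $$\mathrm{mcm}(\boldsymbol{G}_{[k]}^{\{i\}\cup B_i})=1+\mathrm{mcm}(\boldsymbol{G}_{[k]}^{B_i}).$$
   Context: $\boldsymbol{G}_{[k]}^{L}$ is the submatrix of $\boldsymbol{G}$ formed by its first $k$ rows and the columns indexed by $L$. $\mathrm{mcm}(\boldsymbol{G})$ is the maximum number of entries equal to $1$ no two of which lie in the same row or column (maximum matching size of the associated row–column bipartite graph); it is $0$ for a matrix with no columns. *)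

(* Defs.v *)
From mathcomp Require Import all_boot all_order all_algebra.
Set Implicit Arguments. Unset Strict Implicit. Unset Printing Implicit Defensive.

Definition is_mx_matching (p q : nat) (A : 'M[bool]_(p, q))
    (M : {set 'I_p * 'I_q}) : bool :=
  [forall x in M, A x.1 x.2] &&
  [forall x in M, forall y in M, ((x.1 == y.1) || (x.2 == y.2)) ==> (x == y)].

Definition mcm (p q : nat) (A : 'M[bool]_(p, q)) : nat :=
  \max_(M : {set 'I_p * 'I_q} | is_mx_matching A M) #|M|.

(* G_[k]^L : submatrix of G formed by its first k rows and columns indexed
   by L (columns listed in the order of enum L; order is irrelevant for mcm). *)
Definition subG (r m k : nat) (hk : k <= r) (G : 'M[bool]_(r, m))
    (L : {set 'I_m}) : 'M[bool]_(k, #|L|) :=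
  \matrix_(j < k, c < #|L|) G (widen_ord hk j) (enum_val c).

Definition rowsupp (r m : nat) (G : 'M[bool]_(r, m)) (j : 'I_r) : {set 'I_m} :=
  [set i | G j i].

Definition FK (r m : nat) (G : 'M[bool]_(r, m)) (K : {set 'I_r}) : {set 'I_m} :=
  \bigcup_(j in K) rowsupp G j.

Definition firstk (r k : nat) : {set 'I_r} := [set j : 'I_r | j < k].

Definition Bset (m : nat) (A : 'I_m -> {set 'I_m}) (i : 'I_m) : {set 'I_m} :=
  ~: (A i :|: [set i]).

(* Main.v *)
Require Import Defs.
From mathcomp Require Import all_boot all_order all_algebra.
From mathcomp Require Import zify.
Set Implicit Arguments. Unset Strict Implicit. Unset Printing Implicit Defensive.
Definition nbh (T U : finType) (R : T -> U -> bool) (X : {set T}) : {set U} :=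
  [set u | [exists t in X, R t u]].

Lemma nbhU (T U : finType) (R : T -> U -> bool) X Y :
  nbh R (X :|: Y) = nbh R X :|: nbh R Y.
Proof.
apply/setP=> u; rewrite !inE; apply/existsP/orP.
- case=> t /andP[]; rewrite inE => /orP[] ht htu.
    + by left; apply/existsP; exists t; rewrite ht.
    + by right; apply/existsP; exists t; rewrite ht.
- by case=> /existsP[t /andP[ht htu]]; exists t;
     rewrite inE ht ?orbT.
Qed.

Lemma hall (T U : finType) (u0 : U) n : forall (R : T -> U -> bool) (S : {set T}),
  #|S| <= n -> (forall S' : {set T}, S' \subset S -> #|S'| <= #|nbh R S'|) ->
  exists f : T -> U, (forall t, t \in S -> R t (f t)) /\ {in S &, injective f}.
Proof.
elim: n => [|n IH] R S hS hH.
  exists (fun _ => u0); move: hS; rewrite leqn0 cards_eq0 => /eqP ->.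
  by split=> [t|t t']; rewrite inE.
case: (boolP [exists S', [&& (S' : {set T}) \subset S, S' != set0, S' != S &
                                     #|nbh R S'| <= #|S'|]]).
- case/existsP=> S' /and4P[sS' nS'0 nS'S tight].
  have pS' : S' \proper S by rewrite properEneq nS'S.
  have lS' : #|S'| < #|S| by apply: proper_card.
  have [f1 [f1R f1i]] := IH R S' (ltnSE (leq_trans lS' hS))
      (fun X sX => hH X (subset_trans sX sS')).
  pose R2 t u := R t u && (u \notin nbh R S').
  have cS' : #|S'| + #|S :\: S'| = #|S|.
    by rewrite cardsD (setIidPr sS'); have := subset_leq_card sS'; lia.
  have p0 : 0 < #|S'| by rewrite card_gt0.
  have hH2 : forall X : {set T}, X \subset S :\: S' -> #|X| <= #|nbh R2 X|.
  { move=> X sX.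
    have dX : X :&: S' = set0.
      apply/setP=> t; rewrite !inE; case tX: (t \in X) => //=.
      by have := subsetP sX t tX; rewrite inE => /andP[/negbTE].
    have hXS := hH (X :|: S') (ltac:(rewrite subUset sS' andbT;
      exact: (subset_trans sX (subsetDl _ _)))).
    rewrite nbhU cardsU dX cards0 subn0 in hXS.
    have e : nbh R2 X = nbh R X :\: nbh R S'.
      apply/setP=> u; rewrite !inE; apply/existsP/andP.
      + case=> t /andP[tX /andP[htu hu]]; split; first by move: hu; rewrite inE.
        by apply/existsP; exists t; rewrite tX.
      + case=> hu /existsP[t /andP[tX htu]]; exists t.
        by rewrite tX /R2 htu inE.
    rewrite e cardsD.
    have := cardsUI (nbh R X) (nbh R S'); rewrite setIC; lia. }
  have [f2 [f2R f2i]] := IH R2 (S :\: S') (ltac:(lia)) hH2.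
  exists (fun t => if t \in S' then f1 t else f2 t); split.
  + move=> t tS; case: ifP => ht; first exact: f1R.
    by have /andP[] := f2R t (ltac:(by rewrite inE ht)).
  + move=> t t' tS t'S; case: ifP => ht; case: ifP => ht'.
    * exact: f1i.
    * move=> e; have := f2R t' (ltac:(by rewrite inE ht')).
      rewrite /R2 -e inE; case/andP=> _ /existsP[]; exists t.
      by rewrite ht f1R.
    * move=> e; have := f2R t (ltac:(by rewrite inE ht)).
      rewrite /R2 e inE; case/andP=> _ /existsP[]; exists t'.
      by rewrite ht' f1R.
    * by apply: f2i; rewrite inE ?ht ?ht'.
- rewrite negb_exists => /forallP loose.
  case: (set_0Vmem S) => [->|[t tS]].
    by exists (fun _ => u0); split=> [t|t t']; rewrite inE.
  have : 0 < #|nbh R [set t]|.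
    by have := hH [set t] (ltac:(by rewrite sub1set)); rewrite cards1.
  rewrite card_gt0 => /set0Pn[u]; rewrite inE => /existsP[t0].
  rewrite inE => /andP[/eqP -> htu].
  pose R' t1 u1 := R t1 u1 && (u1 != u).
  have hH' : forall X : {set T}, X \subset S :\ t -> #|X| <= #|nbh R' X|.
  { move=> X sX; case: (eqVneq X set0) => [->|nX]; first by rewrite cards0.
    have sXS : X \subset S := subset_trans sX (subsetDl _ _).
    have nXS : X != S.
      apply/eqP=> e; move/subsetP: sX => /(_ t); rewrite e tS => /(_ isT).
      by rewrite !inE eqxx.
    have := loose X; rewrite sXS nX nXS /= -ltnNge => lt.
    have e : nbh R' X = nbh R X :\ u.
      apply/setP=> u1; rewrite !inE; apply/existsP/andP.
      + case=> t1 /andP[tX /andP[h1 h2]]; split=> //.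
        by apply/existsP; exists t1; rewrite tX.
      + case=> hu /existsP[t1 /andP[tX h1]]; exists t1.
        by rewrite tX /R' h1.
    rewrite e cardsD; have := subset_leq_card (subsetIr (nbh R X) [set u]).
    rewrite cards1; lia. }
  have [f' [f'R f'i]] := IH R' (S :\ t)
    (ltac:(move: hS; rewrite (cardsD1 t S) tS; lia)) hH'.
  exists (fun x => if x == t then u else f' x); split.
  + move=> x xS; case: eqP => [->//|/eqP hx].
    by have /andP[] := f'R x (ltac:(by rewrite !inE hx)).
  + move=> x y xS yS; case: eqP => [->|/eqP hx]; case: eqP => [->//|/eqP hy].
    * move=> e; have := f'R y (ltac:(by rewrite !inE hy)).
      by rewrite /R' -e eqxx andbF.
    * move=> e; have := f'R x (ltac:(by rewrite !inE hx)).
      by rewrite /R' e eqxx andbF.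
    * by apply: f'i; rewrite !inE ?hx ?hy.
Qed.
Definition gmatch r m k (hk : k <= r) (G : 'M[bool]_(r, m)) (L : {set 'I_m})
  (M : {set 'I_k * 'I_m}) : bool :=
  [forall x in M, (x.2 \in L) && G (widen_ord hk x.1) x.2] &&
  [forall x in M, forall y in M, ((x.1 == y.1) || (x.2 == y.2)) ==> (x == y)].

Lemma L1 r m k (hk : k <= r) (G : 'M[bool]_(r, m)) L M :
  is_mx_matching (subG hk G L) M -> exists2 M', gmatch hk G L M' & #|M'| = #|M|.
Proof.
case/andP=> /forall_inP h1 /forall_inP h2.
pose g (x : 'I_k * 'I_#|L|) := (x.1, enum_val x.2).
have gi : injective g.
  by move=> [a b] [c d] [-> /enum_val_inj ->].
exists (g @: M); last by rewrite card_imset.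
apply/andP; split.
- apply/forall_inP=> y /imsetP[x xM ->] /=.
  by rewrite enum_valP /=; have := h1 x xM; rewrite mxE.
- apply/forall_inP=> y /imsetP[x xM ->]; apply/forall_inP=> y' /imsetP[x' x'M ->].
  apply/implyP=> /= h; rewrite (inj_eq gi).
  have /forall_inP/(_ x' x'M)/implyP := h2 x xM; apply.
  by case/orP: h => [->//|/eqP/enum_val_inj ->]; rewrite eqxx orbT.
Qed.

Lemma L2 r m k (hk : k <= r) (G : 'M[bool]_(r, m)) L M' :
  gmatch hk G L M' -> exists2 M, is_mx_matching (subG hk G L) M & #|M| = #|M'|.
Proof.
case/andP=> /forall_inP h1 /forall_inP h2.
pose g (x : 'I_k * 'I_#|L|) := (x.1, enum_val x.2).
have gi : injective g.
  by move=> [a b] [c d] [-> /enum_val_inj ->].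
pose M := [set x | g x \in M'].
have e : g @: M = M'.
  apply/setP=> y; apply/imsetP/idP => [[x] | yM].
    by rewrite inE => h ->.
  have /andP[yL _] := h1 y yM.
  exists (y.1, enum_rank_in yL y.2); last by rewrite /g /= enum_rankK_in //; case: y {yM yL}.
  by rewrite inE /g /= enum_rankK_in //; case: y yM {yL}.
exists M; last by rewrite -e card_imset.
apply/andP; split.
- apply/forall_inP=> x; rewrite inE => /h1 /andP[_]; by rewrite mxE.
- apply/forall_inP=> x; rewrite inE => xM; apply/forall_inP=> y; rewrite inE => yM.
  apply/implyP=> h; rewrite -(inj_eq gi).
  have /forall_inP/(_ _ yM)/implyP := h2 _ xM; apply.
  by case/orP: h => [->//|/eqP /= ->]; rewrite eqxx orbT.
Qed.

Theorem lemma2 (m r : nat) (A : 'I_m -> {set 'I_m})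
  (hA : forall i : 'I_m, i \notin A i)
  (G : 'M[bool]_(r, m)) (k : nat) (hk1 : 1 <= k) (hk : k <= r) (d : nat)
  (hd : 1 <= d)
  (hHall : forall K : {set 'I_r}, K \subset firstk r k -> K != set0 ->
             d - 1 + #|K| <= #|FK G K|)
  (i : 'I_m)
  (h1 : #|FK G (firstk r k)| = d - 1 + k)
  (h2 : i |: A i \subset FK G (firstk r k))
  (h3 : d - 1 <= #|A i|) :
  mcm (subG hk G (i |: Bset A i)) = 1 + mcm (subG hk G (Bset A i)).
Proof.
set W := firstk r k. set F := FK G W. set B := Bset A i.
pose C := F :\: A i.
have h1' : #|F| = d - 1 + k := h1.
have AF : A i \subset F by apply: subset_trans h2; apply: subsetUr.
have iF : i \in F by apply: (subsetP h2); rewrite !inE eqxx.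
have iC : i \in C by rewrite inE iF hA.
have CF : C \subset F by apply: subsetDl.
have cC : #|C| = #|F| - #|A i|.
  by rewrite cardsD (setIidPr AF).
have AFc := subset_leq_card AF.
have inF : forall c, (c \in F) = [exists j in W, G j c].
  move=> c; apply/bigcupP/existsP => [[j jW]|[j /andP[jW]]].
    by rewrite inE => h; exists j; rewrite jW.
  by move=> h; exists j; rewrite // inE.
have inW : forall j : 'I_r, (j \in W) = (j < k) by move=> j; rewrite inE.
have wi : injective (widen_ord hk) by move=> a b e; apply: val_inj; exact: (congr1 val e).
have cW : #|W| = k.
  have -> : W = widen_ord hk @: [set: 'I_k].
    apply/setP=> j; rewrite inW; apply/idP/imsetP => [hj|[j' _ ->]] //.
      by exists (Ordinal hj) => //; apply: val_inj.
    exact: (ltn_ord j').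
  by rewrite card_imset // cardsT card_ord.
pose R (c : 'I_m) (j : 'I_k) := G (widen_ord hk j) c.
have hH : forall S' : {set 'I_m}, S' \subset C -> #|S'| <= #|nbh R S'|.
  move=> S' sS'.
  pose K := [set j in W | [forall c in S', ~~ G j c]].
  have KW : K \subset W by apply/subsetP=> j; rewrite inE => /andP[].
  have eN : widen_ord hk @: nbh R S' = W :\: K.
    apply/setP=> j; apply/imsetP/idP => [[j' hj' ->]|].
      move: hj'; rewrite inE => /existsP[c /andP[cS hc]].
      rewrite !inE (_ : widen_ord hk j' < k = true) ?(ltn_ord j') //= negb_forall andbT; apply/existsP; exists c.
      by rewrite cS negbK.
    rewrite !inE => /andP[]; rewrite negb_and => /orP[]; first by move=> /negP.
    move=> hF hj; move: hF.
    rewrite negb_forall => /existsP[c]; rewrite negb_imply negbK => /andP[cS hc].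
    exists (Ordinal hj); last by apply: val_inj.
    by rewrite inE; apply/existsP; exists c; rewrite cS /R; 
       have -> : widen_ord hk (Ordinal hj) = j by apply: val_inj.
  have cN : #|nbh R S'| = k - #|K|.
    rewrite -(card_imset _ wi).
    by rewrite eN cardsD (setIidPr KW) cW.
  have SF : S' \subset F := subset_trans sS' CF.
  have cS := subset_leq_card sS'.
  case: (eqVneq K set0) => [K0|nK0].
    by rewrite cN K0 cards0; lia.
  have hK := hHall K KW nK0.
  have sub : FK G K \subset F :\: S'.
    apply/subsetP=> c /bigcupP[j]; rewrite inE => /andP[jW /forall_inP hj].
    rewrite inE => hc; rewrite !inE inF; apply/andP; split.
      by apply/negP => /hj; rewrite hc.
    by apply/existsP; exists j; rewrite jW.
  have := subset_leq_card sub; rewrite cardsD (setIidPr SF).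
  have := subset_leq_card KW; rewrite cW.
  lia.
have [f [fR fi]] := @hall _ _ (Ordinal hk1) #|C| R C (leqnn _) hH.
pose M0 := [set (f c, c) | c in C].
have cM0 : #|M0| = #|C|.
  by rewrite card_imset // => a b [].
have gM0 : gmatch hk G (i |: B) M0.
  apply/andP; split.
  - apply/forall_inP=> x /imsetP[c cC' ->] /=; rewrite (fR c cC' : G (widen_ord hk (f c)) c) andbT.
    move: cC'; rewrite !inE => /andP[cA _]; by rewrite (negbTE cA) orbN.
  - apply/forall_inP=> x /imsetP[c cC' ->]; apply/forall_inP=> y /imsetP[c' cC'' ->].
    apply/implyP=> /= /orP[/eqP /fi -> //|/eqP -> //].
have low : #|C| <= mcm (subG hk G (i |: B)).
  have [M hM eM] := L2 gM0; rewrite -cM0 -eM.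
  by apply: leq_bigmax_cond.
have snd_inj : forall L (M : {set 'I_k * 'I_m}), gmatch hk G L M ->
    {in M &, injective snd}.
  move=> L M /andP[_ /forall_inP h] x y xM yM e.
  by have /forall_inP/(_ y yM)/implyP := h x xM; rewrite e eqxx orbT => /(_ isT)/eqP.
have up1 : mcm (subG hk G B) <= #|C| - 1.
  apply/bigmax_leqP => M hM; have [M' gM' <-] := L1 hM.
  rewrite -(card_in_imset (snd_inj _ _ gM')).
  have -> : #|C| - 1 = #|C :\ i| by rewrite [in LHS](cardsD1 i C) iC addKn.
  apply: subset_leq_card; apply/subsetP => c /imsetP[x xM ->].
  move: gM' => /andP[/forall_inP /(_ x xM) /andP[xB hx] _].
  move: xB; rewrite !inE negb_or => /andP[xA xi]; rewrite xi xA /= inF.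
  by apply/existsP; exists (widen_ord hk x.1); rewrite inW hx (ltn_ord x.1).
have up2 : mcm (subG hk G (i |: B)) <= 1 + mcm (subG hk G B).
  apply/bigmax_leqP => M hM; have [M' gM' <-] := L1 hM.
  pose M'' := [set x in M' | x.2 != i].
  have gM'' : gmatch hk G B M''.
    move: gM' => /andP[/forall_inP hh1 /forall_inP hh2]; apply/andP; split.
    - apply/forall_inP=> x; rewrite inE => /andP[xM xi].
      have /andP[xL hx] := hh1 x xM; rewrite hx andbT; move: xL.
      by rewrite in_setU1 (negbTE xi).
    - apply/forall_inP=> x; rewrite inE => /andP[xM _].
      apply/forall_inP=> y; rewrite inE => /andP[yM _].
      by have /forall_inP/(_ y yM) := hh2 x xM.
  have [M3 hM3 e3] := L2 gM''.
  have le3 : #|M''| <= mcm (subG hk G B) by rewrite -e3; apply: leq_bigmax_cond.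
  have hX : #|[set x in M' | x.2 == i]| <= 1.
    rewrite -(card_in_imset (sub_in2 _ (snd_inj _ _ gM'))); last first.
      by move=> x; rewrite inE => /andP[].
    rewrite -(cards1 i); apply: subset_leq_card; apply/subsetP=> c /imsetP[x].
    by rewrite !inE => /andP[_ /eqP <-] ->.
  have eM : M' = M'' :|: [set x in M' | x.2 == i].
    by apply/setP=> x; rewrite !inE; case: (x \in M'); case: (x.2 == i).
  rewrite {1}eM; apply: leq_trans (leq_card_setU _ _) _.
  by rewrite addnC leq_add.
have Cpos : 0 < #|C| by rewrite card_gt0; apply/set0Pn; exists i.
apply/eqP; rewrite eqn_leq up2 /=.
apply: leq_trans low; rewrite add1n.
by rewrite -(leq_add2r 1) !addn1 subn1 prednK // in up1.
Qed.
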